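(* For $i=1,\dots,d$ one has $\mathfrak a_{d-1}^i=\mathfrak a_{d-i}$ as ideals of $A_{\infty_1}$. In particular, the set of ideal classes $\{[\mathfrak a_i]:0\le i\le d-1\}$ forms a cyclic subgroup of order $d$ of the ideal class group $\mathsf{Cl}_{A_{\infty_1}}$, generated by $[\mathfrak a_{d-1}]$.
   Context: Let $q$ be a prime power, $k=\mathbb F_q(T)$, $A=\mathbb F_q[T]$, $k_\infty=\mathbb F_q((1/T))$ with $|x|=q^{\deg_T x}$. Let $f\in k_\infty\setminus k$ be a root of $X^2-aX-b$ with $a\in A$ monic, $d:=\deg_T a\ge1$, $b\in\mathbb F_q^*$, with $|f|=q^d$. Let $K=k(f)$, $\infty_1$ the place of $K$ induced by $K\subset k_\infty$, and $A_{\infty_1}$ the Dedekind ring of elements of $K$ regular away from $\infty_1$; one has $A_{\infty_1}=\mathbb F_q[f,fT,\dots,fT^{d-1}]$. For $0\le i\le d-1$, $\mathfrak a_i=(f,fT,\dots,fT^i)\subset A_{\infty_1}$. *)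

(* Defs.v *)
From HB Require Import structures.
From mathcomp Require Import all_boot all_order all_algebra all_field.
Set Implicit Arguments. Unset Strict Implicit. Unset Printing Implicit Defensive.
Import GRing.Theory.
Local Open Scope ring_scope.

(* Setting: F = F_q (a finite field), L a field containing (via iota) F,
   T in L transcendental over F (so F(T) inside L is k = F_q(T)),
   f in L with f^2 = a(T) f + b, f not in F(T).  Then K = k(f) inside L. *)

Section Defs.
Variables (F : finFieldType) (L : fieldType) (iota : {rmorphism F -> L}).

Definition ev (T : L) (p : {poly F}) : L := (map_poly iota p).[T].

Definition transcendental_over (T : L) : Prop :=
  forall p : {poly F}, p != 0 -> ev T p != 0.

Definition in_k (T x : L) : Prop :=
  exists u v : {poly F}, ev T v != 0 /\ x * ev T v = ev T u.

Inductive Ainf (T f : L) (d : nat) : L -> Prop :=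
| Ainf_const c : Ainf T f d (iota c)
| Ainf_gen j : (j < d)%N -> Ainf T f d (f * T ^+ j)
| Ainf_add x y : Ainf T f d x -> Ainf T f d y -> Ainf T f d (x + y)
| Ainf_mul x y : Ainf T f d x -> Ainf T f d y -> Ainf T f d (x * y).

End Defs.

Section Ideals.
Variable (L : fieldType).

Inductive ideal_gen (R S : L -> Prop) : L -> Prop :=
| ig_zero : ideal_gen R S 0
| ig_mul r s : R r -> S s -> ideal_gen R S (r * s)
| ig_add x y : ideal_gen R S x -> ideal_gen R S y -> ideal_gen R S (x + y).

Definition ideal_mul (R I J : L -> Prop) : L -> Prop :=
  ideal_gen R (fun x => exists u v, I u /\ J v /\ x = u * v).

Fixpoint ideal_pow (R I : L -> Prop) (n : nat) : L -> Prop :=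
  match n with
  | 0%N => ideal_gen R (fun x => x = 1)
  | n'.+1 => ideal_mul R (ideal_pow R I n') I
  end.

(* I and J define the same ideal class: alpha I = beta J for nonzero
   alpha, beta in R (R has fraction field K, so this is the usual
   equivalence of (fractional) ideals) *)
Definition same_class (R I J : L -> Prop) : Prop :=
  exists alpha beta, R alpha /\ R beta /\ alpha != 0 /\ beta != 0 /\
    (forall x, (exists y, I y /\ x = alpha * y) <-> (exists z, J z /\ x = beta * z)).

End Ideals.

Definition frak_a (F : finFieldType) (L : fieldType) (iota : {rmorphism F -> L})
  (T f : L) (d i : nat) : L -> Prop :=
  ideal_gen (Ainf iota T f d) (fun x => exists j, (j <= i)%N /\ x = f * T ^+ j).

(* Main.v *)
Require Import Defs.
From HB Require Import structures.
From mathcomp Require Import all_boot all_order all_algebra all_field.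
From mathcomp Require Import ring zify.
Import GRing.Theory.
Local Open Scope ring_scope.

Section EvL.
Variables (F : finFieldType) (L : fieldType) (iota : {rmorphism F -> L}).
Lemma evD x p q : ev iota x (p + q) = ev iota x p + ev iota x q.
Proof. by rewrite /ev rmorphD hornerD. Qed.
Lemma evN x p : ev iota x (- p) = - ev iota x p.
Proof. by rewrite /ev rmorphN hornerN. Qed.
Lemma evB x p q : ev iota x (p - q) = ev iota x p - ev iota x q.
Proof. by rewrite evD evN. Qed.
Lemma evM x p q : ev iota x (p * q) = ev iota x p * ev iota x q.
Proof. by rewrite /ev rmorphM hornerM. Qed.
Lemma evC x c : ev iota x c%:P = iota c.
Proof. by rewrite /ev map_polyC hornerC. Qed.
Lemma evX x : ev iota x 'X = x.
Proof. by rewrite /ev map_polyX hornerX. Qed.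
Lemma evXn x n : ev iota x 'X^n = x ^+ n.
Proof. by rewrite /ev map_polyXn hornerXn. Qed.
Lemma ev0 x : ev iota x 0 = 0.
Proof. by rewrite /ev rmorph0 horner0. Qed.
Lemma ev_sum x n (G : 'I_n -> {poly F}) :
  ev iota x (\sum_(k < n) G k) = \sum_(k < n) ev iota x (G k).
Proof. by rewrite /ev rmorph_sum horner_sum. Qed.
End EvL.

Section P1.
Variables (F : finFieldType) (L : fieldType) (iota : {rmorphism F -> L})
  (T f : L) (a : {poly F}) (b : F) (d : nat).
Hypotheses (d_gt0 : (0 < d)%N) (a_monic : a \is monic) (a_size : size a = d.+1)
  (b_nz : b != 0) (feq : f ^+ 2 = ev iota T a * f + iota b)
  (Ttr : transcendental_over iota T) (fnk : ~ in_k iota T f).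
Local Notation E := (ev iota T).
Local Notation Ef := (ev iota f).

Local Notation R := (Ainf iota T f d).
Local Notation fa := (frak_a iota T f d).

Lemma R1 : R 1. Proof. by have := Ainf_const iota T f d 1; rewrite rmorph1. Qed.
Lemma R0 : R 0. Proof. by have := Ainf_const iota T f d 0; rewrite rmorph0. Qed.
Lemma Rc c : R (iota c). Proof. exact: Ainf_const. Qed.
Lemma Radd x y : R x -> R y -> R (x + y). Proof. exact: Ainf_add. Qed.
Lemma Rmul x y : R x -> R y -> R (x * y). Proof. exact: Ainf_mul. Qed.
Lemma Ropp x : R x -> R (- x).
Proof. by move=> Hx; rewrite -mulN1r -(rmorphN1 iota); apply: Rmul => //; apply: Rc. Qed.
Lemma Rsum n (G : nat -> L) : (forall l, (l < n)%N -> R (G l)) -> R (\sum_(l < n) G l).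
Proof.
elim: n => [|n IH] H; first by rewrite big_ord0; apply: R0.
rewrite big_ord_recr /=; apply: Radd; last exact: H.
by apply: IH => l Hl; apply: H; apply: ltnW.
Qed.
Lemma Rf : R f.
Proof. by have := @Ainf_gen _ _ iota T f d 0 d_gt0; rewrite expr0 mulr1. Qed.

Lemma eva : ev iota T a = \sum_(l < d) iota a`_l * T ^+ l + T ^+ d.
Proof.
rewrite /ev horner_coef size_map_poly a_size big_ord_recr /=.
have -> : (map_poly iota a)`_d = 1.
  by rewrite coef_map; move/monicP: a_monic; rewrite /lead_coef a_size /= => ->; rewrite rmorph1.
rewrite mul1r; congr (_ + _); apply: eq_bigr => i _; by rewrite coef_map.
Qed.

Lemma fTd : f * T ^+ d = f * f - iota b - \sum_(l < d) iota a`_l * (f * T ^+ l).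
Proof.
have : f * ev iota T a = f * f - iota b by rewrite -expr2 feq mulrC addrK.
rewrite eva mulrDr mulr_sumr => <-.
rewrite (eq_bigr (fun l : 'I_d => iota a`_l * (f * T ^+ l))); first by ring.
by move=> l _; ring.
Qed.

Lemma RfT j : (j <= d)%N -> R (f * T ^+ j).
Proof.
rewrite leq_eqVlt => /orP [/eqP ->|Hj]; last exact: Ainf_gen.
rewrite fTd; apply: Radd; first apply: Radd.
- exact: Rmul Rf Rf.
- apply: Ropp; exact: Rc.
apply: Ropp; apply: (@Rsum d (fun l => iota a`_l * (f * T ^+ l))) => l Hl; apply: Rmul; [exact: Rc | exact: Ainf_gen].
Qed.

Lemma ig_mulR S r x : R r -> ideal_gen R S x -> ideal_gen R S (r * x).
Proof.
move=> Hr; elim => [|r' s Hr' Hs|x1 y1 _ IH1 _ IH2].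
- by rewrite mulr0; apply: ig_zero.
- by rewrite mulrA; apply: ig_mul => //; apply: Rmul.
- by rewrite mulrDr; apply: ig_add.
Qed.
Lemma ig_opp S x : ideal_gen R S x -> ideal_gen R S (- x).
Proof. by move=> Hx; rewrite -mulN1r; apply: ig_mulR => //; apply/Ropp/R1. Qed.
Lemma ig_sum S n (G : nat -> L) : (forall l, (l < n)%N -> ideal_gen R S (G l)) ->
  ideal_gen R S (\sum_(l < n) G l).
Proof.
elim: n => [|n IH] H; first by rewrite big_ord0; apply: ig_zero.
rewrite big_ord_recr /=; apply: ig_add; last exact: H.
by apply: IH => l Hl; apply: H; apply: ltnW.
Qed.
Lemma ig_mono (S S' : L -> Prop) x : (forall s, S s -> ideal_gen R S' s) ->
  ideal_gen R S x -> ideal_gen R S' x.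
Proof.
move=> HS; elim => [|r s Hr Hs|x1 y1 _ IH1 _ IH2].
- exact: ig_zero.
- by apply: ig_mulR => //; apply: HS.
- exact: ig_add.
Qed.
Lemma ig_R (S : L -> Prop) x : (forall s, S s -> R s) -> ideal_gen R S x -> R x.
Proof.
move=> HS; elim => [|r s Hr Hs|x1 y1 _ IH1 _ IH2].
- exact: R0.
- by apply: Rmul => //; apply: HS.
- exact: Radd.
Qed.
Lemma ig_gen (S : L -> Prop) s : S s -> ideal_gen R S s.
Proof. by move=> Hs; rewrite -[s]mul1r; apply: ig_mul => //; apply: R1. Qed.

Lemma fa_gen m k : (k <= m)%N -> fa m (f * T ^+ k).
Proof. by move=> Hk; apply: ig_gen; exists k. Qed.

Lemma fa_R m x : (m <= d)%N -> fa m x -> R x.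
Proof.
move=> Hm; apply: ig_R => s [k [Hk ->]]; apply: RfT; exact: leq_trans Hk Hm.
Qed.

Lemma f2Te m e : (e <= m + d)%N -> fa m (f * f * T ^+ e).
Proof.
move=> He; pose e1 := minn e m; pose e2 := (e - e1)%N.
have -> : f * f * T ^+ e = (f * T ^+ e2) * (f * T ^+ e1).
  by rewrite mulrCA -!mulrA -exprD /e2 subnK ?geq_minl // mulrA.
apply: ig_mul; last by exists e1; rewrite geq_minr.
apply: RfT; rewrite /e2 /e1; lia.
Qed.

Lemma fa_prod m u v : (0 < m <= d)%N -> fa m u -> fa (d - 1) v -> fa m.-1 (u * v).
Proof.
move=> /andP [m0 md] Hu Hv.
elim: Hu => [|r s Hr [k [Hk ->]]|x1 y1 _ IH1 _ IH2].
- by rewrite mul0r; apply: ig_zero.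
- rewrite -mulrA; apply: ig_mulR => //.
  elim: Hv => [|r' s' Hr' [l [Hl ->]]|x1 y1 _ IH1 _ IH2].
  + by rewrite mulr0; apply: ig_zero.
  + rewrite mulrCA; apply: ig_mulR => //.
    have -> : f * T ^+ k * (f * T ^+ l) = f * f * T ^+ (k + l) by rewrite exprD; ring.
    apply: f2Te; rewrite -subn1; lia.
  + by rewrite mulrDr; apply: ig_add.
- by rewrite mulrDl; apply: ig_add.
Qed.

Lemma bfTk k : iota b * (f * T ^+ k) =
  (f * T ^+ k) * (f * f) - \sum_(l < d) iota a`_l * ((f * T ^+ k) * (f * T ^+ l))
  - (f * T ^+ k.+1) * (f * T ^+ (d - 1)).
Proof.
have -> : (f * T ^+ k.+1) * (f * T ^+ (d - 1)) = (f * T ^+ k) * (f * T ^+ d).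
  have Ed : T ^+ k.+1 * T ^+ (d - 1) = T ^+ k * T ^+ d.
    by rewrite -!exprD; congr (_ ^+ _); lia.
  transitivity (f * f * (T ^+ k.+1 * T ^+ (d - 1))); first by ring.
  by rewrite Ed; ring.
rewrite fTd.
have -> : \sum_(l < d) iota a`_l * (f * T ^+ k * (f * T ^+ l)) =
   (f * T ^+ k) * \sum_(l < d) iota a`_l * (f * T ^+ l).
  by rewrite mulr_sumr; apply: eq_bigr => l _; ring.
ring.
Qed.

Lemma fa_genR m k r : R r -> (k <= m)%N -> fa m (r * (f * T ^+ k)).
Proof. by move=> Hr Hk; apply: ig_mul => //; exists k. Qed.

Lemma fa_d1 : fa d 1.
Proof.
have Hb : fa d (iota b).
  have -> : iota b = f * (f * T ^+ 0) - \sum_(l < d) iota a`_l * (f * T ^+ l) - 1 * (f * T ^+ d).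
    by rewrite fTd expr0; ring.
  apply: ig_add; [apply: ig_add|apply: ig_opp].
  - by apply: fa_genR => //; apply: Rf.
  - apply: ig_opp; apply: (@ig_sum _ d (fun l => iota a`_l * (f * T ^+ l))) => l Hl.
    by apply: fa_genR; [apply: Rc | apply: ltnW].
  - by apply: fa_genR => //; apply: R1.
have -> : 1 = iota b^-1 * iota b by rewrite -rmorphM mulVf // rmorph1.
by apply: ig_mulR => //; apply: Rc.
Qed.

Lemma part1 i : (i <= d)%N -> forall x,
  ideal_pow R (fa (d - 1)) i x <-> fa (d - i) x.
Proof.
elim: i => [|i IH] Hi x /=.
- rewrite subn0; split.
  + by apply: ig_mono => s ->; apply: fa_d1.
  + move=> Hx; rewrite -[x]mulr1; apply: ig_mul => //; exact: fa_R Hx.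
have IH' := IH (ltnW Hi).
have m0 : (0 < d - i <= d)%N by apply/andP; split; [rewrite subn_gt0 | rewrite leq_subr].
have Em : (d - i.+1 = (d - i).-1)%N by rewrite subnS.
rewrite Em; split.
- apply: ig_mono => s [u [v [Hu [Hv ->]]]].
  by apply: fa_prod => //; apply/IH'.
- apply: ig_mono => s [k [Hk ->]].
  have HP : forall l, (l <= d - i)%N -> ideal_pow R (fa (d - 1)) i (f * T ^+ l).
    by move=> l Hl; apply/IH'; apply: fa_gen.
  have HM : forall l, (l <= d - 1)%N -> fa (d - 1) (f * T ^+ l) by move=> l Hl; apply: fa_gen.
  have Hk' : (k <= d - i)%N by rewrite (leq_trans Hk) // leq_pred.
  have Hk1 : (k.+1 <= d - i)%N by move: Hk Hi; rewrite -subn1; lia.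
  have -> : f * T ^+ k = iota b^-1 * (iota b * (f * T ^+ k)).
    by rewrite mulrA -rmorphM mulVf // rmorph1 mul1r.
  apply: ig_mulR; first exact: Rc.
  rewrite bfTk; apply: ig_add; [apply: ig_add|apply: ig_opp].
  + apply: ig_gen; exists (f * T ^+ k), (f * f); split; [exact: HP|split => //].
    have -> : f * f = f * (f * T ^+ 0) by rewrite expr0 mulr1.
    by apply: fa_genR => //; apply: Rf.
  + apply: ig_opp; apply: (@ig_sum _ d (fun l => iota a`_l * (f * T ^+ k * (f * T ^+ l)))) => l Hl.
    apply: ig_mulR; first exact: Rc.
    apply: ig_gen; exists (f * T ^+ k), (f * T ^+ l); split; [exact: HP|split => //].
    by apply: HM; lia.
  + apply: ig_gen; exists (f * T ^+ k.+1), (f * T ^+ (d - 1)); split; [exact: HP|split => //].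
    exact: HM.
Qed.


Lemma uniqUV U V : E U + E V * f = 0 -> U = 0 /\ V = 0.
Proof.
move=> H; have [V0|Vn] := eqVneq V 0.
  move: H; rewrite V0 ev0 mul0r addr0 => H; split => //.
  by case: (eqVneq U 0) => // Un; move: (Ttr _ Un); rewrite H eqxx.
exfalso; apply: fnk; exists (- U), V; split; first exact: Ttr _ Vn.
by move/eqP: H; rewrite addr_eq0 => /eqP H; rewrite evN H opprK mulrC.
Qed.

Fixpoint repl (s : seq F) : {poly F} * {poly F} :=
  if s is c :: s' then
    let AB := repl s' in (b%:P * AB.2, AB.1 + a * AB.2 + c%:P)
  else (0, 0).

Lemma repl_spec s : let AB := repl s in
  f * Ef (Poly s) = E AB.1 + E AB.2 * f /\
  size AB.2 = (if Poly s == 0%R then 0 else d * (size (Poly s)).-1 + 1)%N /\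
  lead_coef AB.2 = lead_coef (Poly s) /\
  (AB.1 = 0 \/ (size AB.1 + d <= size AB.2)%N).
Proof.
elim: s => [|c s IH] /=.
  by rewrite !polyC0 !ev0 mulr0 mul0r addr0 eqxx size_poly0 lead_coef0; do !split; by left.
case: (repl s) IH => A B /= [Hev [Hs [Hl HA]]].
rewrite cons_poly_def; set q := Poly s in Hev Hs Hl *.
split.
  rewrite (evD _ _ iota f) (evM _ _ iota f) (evX _ _ iota f) (evC _ _ iota f) -/q.
  have -> : f * (Ef q * f + iota c) = (f * Ef q) * f + iota c * f by ring.
  rewrite Hev !evD !evM !evC.
  have -> : (E A + E B * f) * f + iota c * f = E A * f + E B * f ^+ 2 + iota c * f by ring.
  rewrite feq; ring.
have [q0|qn] := eqVneq q 0.
  have B0 : B = 0 by apply/eqP; rewrite -size_poly_eq0 Hs q0 eqxx.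
  have A0 : A = 0 by case: HA => // ; rewrite B0 size_poly0; lia.
  rewrite q0 A0 B0 mul0r !mulr0 !add0r; split.
    rewrite polyC_eq0; case: eqVneq => [->|cn]; first by rewrite size_poly0.
    by rewrite size_polyC cn muln0.
  by split => //; left.
have Bn : B != 0 by rewrite -size_poly_eq0 Hs (negbTE qn) addn1.
have sB : (0 < size B)%N by rewrite lt0n size_poly_eq0.
have saB : size (a * B) = (d + size B)%N.
  by rewrite size_mul ?Bn ?monic_neq0 //; rewrite a_size addSn.
have sAc : (size (A + c%:P)%R < size (a * B)%R)%N.
  apply: (leq_ltn_trans (size_add _ _)); rewrite saB gtn_max.
  apply/andP; split; last by apply: (leq_ltn_trans (size_polyC_leq1 c)); lia.
  case: HA => [->|H]; [rewrite size_poly0; lia | idtac].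
  by apply: (leq_trans _ (leq_addl d _)); apply: leq_trans H; rewrite -addn1 leq_add2l.
have -> : A + a * B + c%:P = a * B + (A + c%:P) by ring.
have nq : (q * 'X + c%:P != 0).
  by rewrite -size_poly_eq0 size_MXaddC (negbTE qn).
rewrite (negbTE nq) size_MXaddC (negbTE qn) /= size_addl // saB Hs (negbTE qn).
split; first by case: (size q) (size_poly_gt0 q) qn => //; lia.
split.
  rewrite lead_coefDl // lead_coef_monicM // Hl.
  rewrite lead_coefDl ?lead_coefMX // size_mulX //.
  apply: (leq_ltn_trans (size_polyC_leq1 c)); rewrite ltnS lt0n size_poly_eq0 //.
by right; rewrite size_mul ?polyC_eq0 // size_polyC b_nz add1n /= addnC Hs (negbTE qn).
Qed.

Lemma resid k (B : {poly F}) : (k < d)%N -> B != 0 -> (d %| (size B).-1)%N ->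
  ((size (B * 'X^k)%R).-1 %% d)%N = k.
Proof.
move=> kd Bn /dvdnP [t Ht].
have sB : (0 < size B)%N by rewrite size_poly_gt0.
rewrite size_mulXn // -(prednK sB) addnS /= Ht.
by rewrite mulnC -modnDmr modnMr addn0 modn_small.
Qed.

Lemma sumX (B : nat -> {poly F}) n : (n <= d)%N ->
  (forall k, (k < n)%N -> B k = 0 \/ (d %| (size (B k)).-1)%N) ->
  let S := \sum_(k < n) B k * 'X^k in
  (forall k, (k < n)%N -> (size (B k * 'X^k)%R <= size S)%N) /\
  (S = 0 -> forall k, (k < n)%N -> B k = 0) /\
  (S != 0 -> ((size S).-1 %% d < n)%N).
Proof.
elim: n => [|n IH] nd HB /=.
  by rewrite big_ord0; split => //; split => //; rewrite eqxx.
have [IH1 [IH2 IH3]] := IH (ltnW nd) (fun k Hk => HB k (ltnW Hk)).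
rewrite big_ord_recr /=.
set S := \sum_(i < n) B i * 'X^i.
have [Bn0|Bnn] := eqVneq (B n) 0.
  rewrite Bn0 mul0r addr0; split; last split.
  - move=> k; rewrite ltnS leq_eqVlt => /orP [/eqP ->|Hk]; last exact: IH1.
    by rewrite Bn0 mul0r size_poly0.
  - move=> S0 k; rewrite ltnS leq_eqVlt => /orP [/eqP ->|Hk] //; exact: IH2.
  - by move=> Sn; apply: ltnW; apply: IH3.
have Hres : ((size (B n * 'X^n)%R).-1 %% d)%N = n.
  by apply: resid => //; case: (HB n (ltnSn n)) => // H; move: Bnn; rewrite H eqxx.
have tn : B n * 'X^n != 0 by rewrite mulf_neq0 // monic_neq0 // monicXn.
have [S0|Sn] := eqVneq S 0.
  rewrite S0 add0r; split; last split.
  - move=> k; rewrite ltnS leq_eqVlt => /orP [/eqP ->|Hk] //.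
    by rewrite (IH2 S0 k Hk) mul0r size_poly0.
  - by move=> H; move: tn; rewrite H eqxx.
  - by rewrite Hres.
have [r rn Hr] : exists2 r, (r < n)%N & ((size S).-1 %% d)%N = r.
  by exists ((size S).-1 %% d)%N => //; apply: IH3.
have Hneq : size S != size (B n * 'X^n).
  by apply/eqP => E; move: Hr; rewrite E Hres => E'; move: rn; rewrite -E' ltnn.
case: (ltngtP (size S) (size (B n * 'X^n))) => [Hlt|Hgt|Heq]; last by move: Hneq; rewrite Heq eqxx.
- have E : size (S + B n * 'X^n) = size (B n * 'X^n) by rewrite addrC size_polyDl.
  rewrite E; split; last split.
  + move=> k; rewrite ltnS leq_eqVlt => /orP [/eqP ->|Hk] //.
    by apply: (leq_trans (IH1 k Hk)); apply: ltnW.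
  + by move=> H; move: tn; rewrite -size_poly_eq0 -E H size_poly0.
  + by rewrite Hres.
- have E : size (S + B n * 'X^n) = size S by rewrite size_polyDl.
  rewrite E; split; last split.
  + move=> k; rewrite ltnS leq_eqVlt => /orP [/eqP ->|Hk]; last exact: IH1.
    exact: ltnW.
  + by move=> H; move: Sn; rewrite -size_poly_eq0 -E H size_poly0.
  + by rewrite Hr; move=> _; apply: ltnW.
Qed.

Lemma repl_p (p : {poly F}) :
  f * Ef p = E (repl p).1 + E (repl p).2 * f /\
  size (repl p).2 = (if p == 0%R then 0 else d * (size p).-1 + 1)%N /\
  ((repl p).1 = 0 \/ (size (repl p).1 + d <= size (repl p).2)%N).
Proof. by have := repl_spec p; rewrite polyseqK => -[H1 [H2 [_ H3]]]. Qed.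

Lemma rep_sum (p : nat -> {poly F}) :
  let U := \sum_(k < d) (repl (p k)).1 * 'X^k in
  let V := \sum_(k < d) (repl (p k)).2 * 'X^k in
  \sum_(k < d) f * Ef (p k) * T ^+ k = E U + E V * f /\
  (V = 0 -> forall k, (k < d)%N -> p k = 0) /\
  (forall k, (k < d)%N -> (size ((repl (p k)).2 * 'X^k)%R <= size V)%N) /\
  (U = 0 \/ (size U + d <= size V)%N).
Proof.
move=> U V.
have HB : forall k, (k < d)%N -> (repl (p k)).2 = 0 \/ (d %| (size (repl (p k)).2).-1)%N.
  move=> k _; have [_ [H _]] := repl_p (p k); move: H.
  case: eqVneq => [_ /eqP|_ ->]; first by rewrite size_poly_eq0 => /eqP; left.
  by right; rewrite addn1 /= dvdn_mulr.
have [S1 [S2 _]] := @sumX (fun k => (repl (p k)).2) d (leqnn d) HB.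
split.
  rewrite /U /V !ev_sum mulr_suml -big_split /=; apply: eq_bigr => k _.
  have [H _] := repl_p (p k).
  by rewrite H !evM !evXn; ring.
split.
  move=> V0 k Hk; have B0 := S2 V0 k Hk.
  have [_ [H _]] := repl_p (p k); move: H; rewrite B0 size_poly0.
  by case: eqVneq => // _; rewrite addn1.
split; first exact: S1.
pose P m := (m = 0 \/ m + d <= size V)%N.
have HM : P (\max_(k < d) size ((repl (p k)).1 * 'X^k)%R).
  apply: (big_ind P); first by left.
    move=> x y [->|Hx] [->|Hy]; rewrite ?max0n ?maxn0; try by [left | right].
    by right; rewrite addn_maxl geq_max Hx Hy.
  move=> k _; have [_ [_ H]] := repl_p (p k).
  have [A0|An] := eqVneq (repl (p k)).1 0; first by left; rewrite A0 mul0r size_poly0.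
  right; case: H => [A0|H]; first by move: An; rewrite A0 eqxx.
  apply: leq_trans (S1 k (ltn_ord k)).
  have [B0|Bn] := eqVneq (repl (p k)).2 0; first by move: H; rewrite B0 size_poly0; lia.
  by rewrite !size_mulXn // -addnA leq_add2l.
have HU := size_sum (index_enum 'I_d) xpredT (fun k : 'I_d => (repl (p k)).1 * 'X^k).
case: HM => [M0|HM].
  by left; apply/eqP; rewrite -size_poly_eq0 -leqn0 -M0.
by right; apply: leq_trans HM; rewrite leq_add2r.
Qed.

Lemma sum_ind {j : nat} (G : nat -> L) : (j < d)%N ->
  \sum_(k < d) (if k == j :> nat then G k else 0) = G j.
Proof.
move=> jd; rewrite (bigD1 (Ordinal jd)) //= eqxx big1 ?addr0 // => k Hk.
by case: eqP => // Ek; move: Hk; rewrite -val_eqE /= Ek eqxx.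
Qed.

Definition Hm (m : nat) (x : L) : Prop := exists (c : nat -> F) (r : nat -> {poly F}),
  x = \sum_(k < d) (iota (c k) * f + f ^+ 2 * Ef (r k)) * T ^+ k /\
  (forall k, (m < k)%N -> (k < d)%N -> c k = 0).

Lemma H0 m : Hm m 0.
Proof.
exists (fun _ => 0), (fun _ => 0); split => //.
by rewrite big1 // => k _; rewrite rmorph0 ev0 mul0r mulr0 addr0 mul0r.
Qed.

Lemma Hadd m x y : Hm m x -> Hm m y -> Hm m (x + y).
Proof.
move=> [c1 [r1 [-> H1]]] [c2 [r2 [-> H2]]].
exists (fun k => c1 k + c2 k), (fun k => r1 k + r2 k); split.
  rewrite -big_split /=; apply: eq_bigr => k _; rewrite rmorphD evD; ring.
by move=> k Hk Hk'; rewrite H1 // H2 // addr0.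
Qed.

Lemma Hscal m e x : Hm m x -> Hm m (iota e * x).
Proof.
move=> [c [r [-> H]]]; exists (fun k => e * c k), (fun k => e%:P * r k); split.
  rewrite mulr_sumr; apply: eq_bigr => k _; rewrite rmorphM evM evC; ring.
by move=> k Hk Hk'; rewrite H // mulr0.
Qed.

Lemma Hopp m x : Hm m x -> Hm m (- x).
Proof. by move=> Hx; rewrite -mulN1r -(rmorphN1 iota); apply: Hscal. Qed.

Lemma Hsum m n (G : nat -> L) : (forall l, (l < n)%N -> Hm m (G l)) ->
  Hm m (\sum_(l < n) G l).
Proof.
elim: n => [|n IH] H; first by rewrite big_ord0; apply: H0.
rewrite big_ord_recr /=; apply: Hadd; last exact: H.
by apply: IH => l Hl; apply: H; apply: ltnW.
Qed.

Lemma Hmono {m m' x} : (m <= m')%N -> Hm m x -> Hm m' x.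
Proof.
move=> mm [c [r [Hx H]]]; exists c, r; split => // k Hk; apply: H.
exact: leq_ltn_trans mm Hk.
Qed.

Lemma Hto1 {m x} : Hm m x -> Hm (d - 1) x.
Proof.
move=> [c [r [Hx H]]]; exists c, r; split => // k Hk Hk'; exfalso; move: Hk Hk'; lia.
Qed.

Lemma Hf {x} : Hm (d - 1) x -> Hm 0 (f * x).
Proof.
move=> [c [r [-> H]]]; exists (fun _ => 0), (fun k => (c k)%:P + 'X * r k); split => //.
rewrite mulr_sumr; apply: eq_bigr => k _; rewrite rmorph0 evD evM evX evC; ring.
Qed.

Lemma Hfm {m x} : Hm m x -> Hm m (f * x).
Proof. by move=> Hx; apply: (Hmono (leq0n m)); apply: Hf; apply: Hto1 Hx. Qed.

Lemma Hpmul m p x : Hm m x -> Hm m (Ef p * x).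
Proof.
move=> Hx; elim/poly_ind: p => [|q c IH].
  by rewrite ev0 mul0r; apply: H0.
rewrite evD evM evX evC mulrDl.
have -> : Ef q * f * x = f * (Ef q * x) by ring.
by apply: Hadd; [apply: Hfm | apply: Hscal].
Qed.

Lemma Hgen {k} : (k < d)%N -> Hm k (f * T ^+ k).
Proof.
move=> kd; exists (fun l => if l == k then 1 else 0), (fun _ => 0); split.
  rewrite -(sum_ind (fun l => f * T ^+ l) kd); apply: eq_bigr => l _.
  by case: eqP => _; rewrite ?rmorph1 ?rmorph0 ev0 mulr0 addr0 ?mul1r ?mul0r.
by move=> l Hl _; case: eqP => // E; move: Hl; rewrite E ltnn.
Qed.

Lemma f2T e : f ^+ 2 * T ^+ (d + e) =
  f * (f ^+ 2 * T ^+ e) - iota b * (f * T ^+ e) - \sum_(l < d) iota a`_l * (f ^+ 2 * T ^+ (l + e)).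
Proof.
have -> : f ^+ 2 * T ^+ (d + e) = (f * T ^+ d) * (f * T ^+ e) by rewrite exprD; ring.
rewrite fTd mulrBl mulrBl mulr_suml.
have -> : \sum_(l < d) iota a`_l * (f ^+ 2 * T ^+ (l + e)) =
   \sum_(l < d) iota a`_l * (f * T ^+ l) * (f * T ^+ e).
  by apply: eq_bigr => l _; rewrite exprD; ring.
ring.
Qed.

Lemma Hsq e : (e < 2 * d)%N -> Hm (e - d) (f ^+ 2 * T ^+ e).
Proof.
elim/ltn_ind: e => e IH He.
case: (ltnP e d) => [ed|de].
  exists (fun _ => 0), (fun l => if l == e then 1 else 0); split; last by [].
  rewrite -(sum_ind (fun l => f ^+ 2 * T ^+ l) ed); apply: eq_bigr => l _.
  by case: eqP => _; rewrite rmorph0 mul0r add0r ?rmorph1 ?ev0 /ev ?rmorph1 ?hornerC ?mulr1 ?mulr0 ?mul0r.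
have Ee : e = (d + (e - d))%N by rewrite subnKC.
set r0 := (e - d)%N in Ee *; rewrite Ee f2T.
have r0d : (r0 < d)%N by rewrite /r0; lia.
apply: Hadd; first apply: Hadd.
- apply: (Hmono (leq0n r0)); apply: Hf; apply: Hto1; apply: (IH r0); rewrite /r0; lia.
- by apply: Hopp; apply: Hscal; apply: Hgen.
apply: Hopp; apply: (@Hsum _ d (fun l => iota a`_l * (f ^+ 2 * T ^+ (l + r0)))) => l Hl.
apply: Hscal; apply: (Hmono _ (IH _ _ _)); rewrite /r0; lia.
Qed.

Lemma Hcore {m k y} : (k < d)%N -> Hm m y -> Hm m (f * T ^+ k * y).
Proof.
move=> kd [c [r [-> H]]]; rewrite mulr_sumr.
apply: (@Hsum _ d (fun l => f * T ^+ k * ((iota (c l) * f + f ^+ 2 * Ef (r l)) * T ^+ l))) => l ld.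
have -> : f * T ^+ k * ((iota (c l) * f + f ^+ 2 * Ef (r l)) * T ^+ l) =
  iota (c l) * (f ^+ 2 * T ^+ (k + l)) + Ef (r l) * (f * (f ^+ 2 * T ^+ (k + l))).
  by rewrite exprD; ring.
have Hs : Hm (k + l - d) (f ^+ 2 * T ^+ (k + l)) by apply: Hsq; lia.
apply: Hadd.
  case: (ltnP m l) => [ml|lm]; first by rewrite H // rmorph0 mul0r; apply: H0.
  by apply: Hscal; apply: (Hmono _ Hs); lia.
by apply: Hpmul; apply: (Hmono (leq0n m)); apply: Hf; apply: Hto1 Hs.
Qed.

Lemma Hmul m x y : Hm (d - 1) x -> Hm m y -> Hm m (x * y).
Proof.
move=> [c [r [-> _]]] Hy; rewrite mulr_suml.
apply: (@Hsum _ d (fun k => (iota (c k) * f + f ^+ 2 * Ef (r k)) * T ^+ k * y)) => k kd.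
have -> : (iota (c k) * f + f ^+ 2 * Ef (r k)) * T ^+ k * y =
  iota (c k) * (f * T ^+ k * y) + Ef (r k) * (f * (f * T ^+ k * y)) by ring.
have Hc := Hcore kd Hy.
by apply: Hadd; [apply: Hscal | apply: Hpmul; apply: Hfm].
Qed.

Definition Gset (x : L) := exists c y, Hm (d - 1) y /\ x = iota c + y.

Lemma Ainf_G {x} : Ainf iota T f d x -> Gset x.
Proof.
elim => [c|j jd|x1 y1 _ [c1 [z1 [H1 ->]]] _ [c2 [z2 [H2 ->]]]|x1 y1 _ [c1 [z1 [H1 ->]]] _ [c2 [z2 [H2 ->]]]].
- by exists c, 0; split; [apply: H0 | rewrite addr0].
- by exists 0, (f * T ^+ j); split; [apply: Hto1 (Hgen jd) | rewrite rmorph0 add0r].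
- exists (c1 + c2), (z1 + z2); split; first exact: Hadd.
  by rewrite rmorphD; ring.
- exists (c1 * c2), (iota c1 * z2 + iota c2 * z1 + z1 * z2); split.
    by apply: Hadd; [apply: Hadd; apply: Hscal | apply: Hmul].
  by rewrite rmorphM; ring.
Qed.

Lemma fa_H i x : (i < d)%N -> fa i x -> Hm i x.
Proof.
move=> id; elim => [|r s Hr [k [Hk ->]]|x1 y1 _ IH1 _ IH2].
- exact: H0.
- have [c [y [Hy ->]]] := Ainf_G Hr.
  have Hs : Hm i (f * T ^+ k) by apply: (Hmono Hk); apply: Hgen; lia.
  by rewrite mulrDl; apply: Hadd; [apply: Hscal | apply: Hmul].
- exact: Hadd.
Qed.

Lemma K0 {p : nat -> {poly F}} {W} :
  \sum_(k < d) f * Ef (p k) * T ^+ k = E W -> (forall k, (k < d)%N -> p k = 0) /\ W = 0.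
Proof.
have [Heq [HV [_ HU]]] := rep_sum p; rewrite Heq => HW.
set U := \sum_(k < d) (repl (p k)).1 * 'X^k in Heq HU HW.
set V := \sum_(k < d) (repl (p k)).2 * 'X^k in Heq HV HU HW.
have [UW V0] : U - W = 0 /\ V = 0 by apply: uniqUV; rewrite evB -HW; ring.
split; first exact: HV.
move/eqP: UW; rewrite subr_eq0 => /eqP <-.
by case: HU => // ; rewrite V0 size_poly0; lia.
Qed.

Lemma Hm_sum {m x} : Hm m x -> exists p : nat -> {poly F},
  x = \sum_(k < d) f * Ef (p k) * T ^+ k /\ (forall k, (m < k)%N -> (k < d)%N -> (p k)`_0 = 0).
Proof.
move=> [c [r [-> H]]]; exists (fun k => (c k)%:P + 'X * r k); split.
  by apply: eq_bigr => k _; rewrite evD evM evX evC; ring.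
by move=> k Hk Hk'; rewrite coefD coefXM coefC eqxx H // addr0.
Qed.

Lemma Kc {m x W} : Hm m x -> x = E W -> W = 0.
Proof.
move=> /Hm_sum [p [-> _]] HW; exact: (K0 HW).2.
Qed.

Lemma Kgen {m x j e} : Hm m x -> (m < j)%N -> (j < d)%N -> x = iota e * (f * T ^+ j) -> e = 0.
Proof.
move=> /Hm_sum [p [-> Hp]] mj jd Hx.
pose q k := if k == j then e%:P else 0.
have Hq : \sum_(k < d) f * Ef (q k) * T ^+ k = iota e * (f * T ^+ j).
  rewrite -(sum_ind (fun k => iota e * (f * T ^+ k)) jd); apply: eq_bigr => k _.
  by rewrite /q; case: eqP => _; rewrite ?evC ?ev0; ring.
have H0' : \sum_(k < d) f * Ef (p k - q k) * T ^+ k = E 0.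
  rewrite ev0; apply/eqP; rewrite -[_ == 0]/(_ == _).
  have -> : \sum_(k < d) f * Ef (p k - q k) * T ^+ k =
     \sum_(k < d) f * Ef (p k) * T ^+ k - \sum_(k < d) f * Ef (q k) * T ^+ k.
    by rewrite -sumrB; apply: eq_bigr => k _; rewrite evB; ring.
  by rewrite Hx Hq subrr.
have := (@K0 (fun k => p k - q k) 0 H0').1 j jd; rewrite /q eqxx => /eqP; rewrite subr_eq0 => /eqP E'.
by have := Hp j mj jd; rewrite E' coefC eqxx.
Qed.

Lemma fnz : f != 0.
Proof.
apply/eqP => f0; apply: fnk; exists 0, 1; split.
  by rewrite evC rmorph1 oner_neq0.
by rewrite f0 mul0r ev0.
Qed.

Lemma Gdec {x} : Gset x -> exists c U V, x = E U + E V * f /\ (V = 0 -> x = iota c) /\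
  (V != 0 -> (size U < size V + d)%N) /\ ((size V <= 1)%N -> exists c', x = iota c + iota c' * f).
Proof.
move=> [c [y [Hy ->]]]; have [p [Ey _]] := Hm_sum Hy.
have [Heq [HV [HS HU]]] := rep_sum p.
set U := \sum_(k < d) (repl (p k)).1 * 'X^k in Heq HU.
set V := \sum_(k < d) (repl (p k)).2 * 'X^k in Heq HV HS HU.
have Ep0 : (forall k, (k < d)%N -> p k = 0) -> y = 0.
  move=> H; rewrite Ey big1 // => k _; rewrite H // ev0; ring.
exists c, (c%:P + U), V; split; first by rewrite evD evC Ey Heq; ring.
split; first by move=> V0; rewrite Ep0 ?addr0 //; exact: HV.
split.
  move=> Vn; apply: (leq_ltn_trans (size_add _ _)); rewrite gtn_max; apply/andP; split.
    apply: (leq_ltn_trans (size_polyC_leq1 c)).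
    by move: Vn; rewrite -size_poly_eq0; case: (size V) => //= n _; lia.
  case: HU => [->|HU]; first by rewrite size_poly0; move: Vn; rewrite -size_poly_eq0; lia.
  by apply: (leq_trans _ (leq_addr d _)); apply: leq_trans HU; rewrite -addn1 leq_add2l.
move=> V1.
have Hk : forall k, (0 < k)%N -> (k < d)%N -> p k = 0.
  move=> k k0 kd; have := HS k kd; have [_ [H _]] := repl_p (p k).
  case: (eqVneq (p k) 0) H => // pn H.
  rewrite size_mulXn; last by rewrite -size_poly_eq0 H addn1.
  rewrite H addn1 addnS => S; move: (leq_trans S V1); rewrite ltnS leqn0 addn_eq0 => /andP [/eqP k00 _].
  by move: k0; rewrite k00.
have H0 : (size (p 0%N) <= 1)%N.
  have := HS 0%N d_gt0; have [_ [H _]] := repl_p (p 0%N).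
  case: (eqVneq (p 0%N) 0) H => [->|pn H]; first by rewrite size_poly0.
  rewrite size_mulXn; last by rewrite -size_poly_eq0 H addn1.
  rewrite H add0n => S; have S' := leq_trans S V1.
  have : (d * (size (p 0%N)).-1 = 0)%N by move: S'; rewrite addn1 ltnS leqn0 => /eqP.
  move/eqP; rewrite muln_eq0 (negbTE (lt0n_neq0 d_gt0)) /= => /eqP.
  by case: (size (p 0%N)) => // -[].
exists (p 0%N)`_0; congr (_ + _).
rewrite Ey; case: d d_gt0 Hk => // d' _ Hk; rewrite big_ord_recl big1.
  by rewrite addr0 /= {1}(size1_polyC H0) evC expr0 mulr1 mulrC.
by move=> k _; rewrite Hk ?ev0 ?mulr0 ?mul0r // ltn_ord.
Qed.

Lemma ZW z w : Gset z -> Gset w -> z * w = f ^+ 2 ->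
  (exists c, z = iota c) \/ (exists e, w = iota e) \/
  (exists c' e', z = iota c' * f /\ w = iota e' * f).
Proof.
move=> Gz Gw zw.
have [cz [Uz [Vz [Ez [Vz0 [Vzs Vz1]]]]]] := Gdec Gz.
have [cw [Uw [Vw [Ew [Vw0 [Vws Vw1]]]]]] := Gdec Gw.
have [V0|Vzn] := eqVneq Vz 0; first by left; exists cz; apply: Vz0.
have [V0|Vwn] := eqVneq Vw 0; first by right; left; exists cw; apply: Vw0.
right; right.
have Hprod : z * w = E (Uz * Uw + b%:P * (Vz * Vw)) + E (Uz * Vw + Uw * Vz + a * (Vz * Vw)) * f.
  have -> : z * w = E Uz * E Uw + (E Uz * E Vw + E Uw * E Vz) * f + E Vz * E Vw * f ^+ 2.
    by rewrite Ez Ew; ring.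
  by rewrite feq !evD !evM evC; ring.
have [_ HS] : (Uz * Uw + b%:P * (Vz * Vw)) - b%:P = 0 /\
     (Uz * Vw + Uw * Vz + a * (Vz * Vw)) - a = 0.
  apply: uniqUV; rewrite !evB evC.
  have : E (Uz * Uw + b%:P * (Vz * Vw)) + E (Uz * Vw + Uw * Vz + a * (Vz * Vw)) * f = f ^+ 2.
    by rewrite -Hprod.
  rewrite feq; set P0 := E (Uz * Uw + _); set P1 := E (Uz * Vw + _ + _) => H.
  transitivity (P0 + P1 * f - (E a * f + iota b)); first by ring.
  by rewrite H subrr.
move/eqP: HS; rewrite subr_eq0 => /eqP HS.
have [nz Hnz] : exists n, size Vz = n.+1.
  by exists (size Vz).-1; rewrite prednK // lt0n size_poly_eq0.
have [nw Hnw] : exists n, size Vw = n.+1.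
  by exists (size Vw).-1; rewrite prednK // lt0n size_poly_eq0.
have sVV : size (a * (Vz * Vw)) = (d.+1 + nz + nw)%N.
  have s1 : size (Vz * Vw) = (nz + nw).+1 by rewrite size_mul // Hnz Hnw addnS /= addSn.
  have VV : Vz * Vw != 0 by rewrite mulf_neq0.
  by rewrite size_mul ?(monic_neq0 a_monic) // s1 a_size addnS /= addnA.
have HUz : (size (Uz * Vw)%R < size (a * (Vz * Vw))%R)%N.
  rewrite sVV; apply: (leq_ltn_trans (size_mul_leq _ _)); rewrite Hnw addnS /=.
  have := Vzs Vzn; rewrite Hnz => H; set s := size Uz in H *; lia.
have HUw : (size (Uw * Vz)%R < size (a * (Vz * Vw))%R)%N.
  rewrite sVV; apply: (leq_ltn_trans (size_mul_leq _ _)); rewrite Hnz addnS /=.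
  have := Vws Vwn; rewrite Hnw => H; set s := size Uw in H *; lia.
have Hsz : size a = (d.+1 + nz + nw)%N.
  rewrite -HS addrC size_polyDl ?sVV //.
  apply: (leq_ltn_trans (size_add _ _)); rewrite gtn_max -sVV HUz HUw //.
have nz0 : nz = 0%N by move: Hsz; rewrite a_size; lia.
have nw0 : nw = 0%N by move: Hsz; rewrite a_size; lia.
have [c'z Ez'] := Vz1 (eq_leq (etrans Hnz (congr1 S nz0))).
have [c'w Ew'] := Vw1 (eq_leq (etrans Hnw (congr1 S nw0))).
pose P0 := (cz * cw + (c'z * c'w - 1) * b)%:P.
pose P1 := (cz * c'w + c'z * cw)%:P + (c'z * c'w - 1)%:P * a.
have [P00 P10] : P0 = 0 /\ P1 = 0.
  apply: uniqUV; rewrite /P0 /P1 evD !evM !evC !(rmorphD, rmorphM, rmorphN1, rmorphB, rmorph1).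
  transitivity (z * w - f ^+ 2); last by rewrite zw subrr.
  rewrite Ez' Ew'.
  have -> : (iota cz + iota c'z * f) * (iota cw + iota c'w * f) = iota cz * iota cw +
    (iota cz * iota c'w + iota c'z * iota cw) * f + iota c'z * iota c'w * f ^+ 2 by ring.
  rewrite feq; ring.
have c1 : c'z * c'w = 1.
  move: (congr1 (fun p : {poly F} => p`_d) P10).
  rewrite /= coefD coefC coefCM coef0.
  have -> : (d == 0%N) = false by apply/eqP; lia.
  have -> : a`_d = 1 by move/monicP: a_monic; rewrite /lead_coef a_size.
  by rewrite add0r mulr1 => /eqP; rewrite subr_eq0 => /eqP.
move: P10; rewrite /P1 c1 subrr polyC0 mul0r addr0 => /eqP; rewrite polyC_eq0 => /eqP E1.
move: P00; rewrite /P0 c1 subrr mul0r addr0 => /eqP; rewrite polyC_eq0 mulf_eq0 => /orP E2.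
have c'zn : c'z != 0 by apply/eqP => H0; move: c1; rewrite H0 mul0r => /eqP; rewrite eq_sym oner_eq0.
have c'wn : c'w != 0 by apply/eqP => H0; move: c1; rewrite H0 mulr0 => /eqP; rewrite eq_sym oner_eq0.
have [cz0 cw0] : cz = 0 /\ cw = 0.
  case: E2 => /eqP H0.
    split => //; move: E1; rewrite H0 mul0r add0r => /eqP; rewrite mulf_eq0 (negbTE c'zn) /=.
    by move/eqP.
  split => //; move: E1; rewrite H0 mulr0 addr0 => /eqP; rewrite mulf_eq0 (negbTE c'wn) orbF.
  by move/eqP.
exists c'z, c'w; split.
  by rewrite Ez' cz0 rmorph0 add0r.
by rewrite Ew' cw0 rmorph0 add0r.
Qed.

Lemma part2 i j : (i < j <= d - 1)%N -> ~ same_class R (fa i) (fa j).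
Proof.
move=> /andP [ij jd1] [al [be [Hal [Hbe [aln [ben Hs]]]]]].
have jd : (j < d)%N by move: jd1 d_gt0; lia.
have id : (i < d)%N by move: ij jd; lia.
have Hf : forall m, fa m f by move=> m; have := @fa_gen m 0 (leq0n m); rewrite expr0 mulr1.
have [z [Hz Ez]] : exists z, fa i z /\ be * f = al * z.
  by apply: (Hs (be * f)).2; exists f; split => //; apply: Hf.
have [w [Hw Ew]] : exists w, fa j w /\ al * f = be * w.
  by apply: (Hs (al * f)).1; exists f; split => //; apply: Hf.
have zw : z * w = f ^+ 2.
  apply: (mulfI (mulf_neq0 aln ben)).
  transitivity ((al * z) * (be * w)); first by ring.
  by rewrite -Ez -Ew; ring.
have Gz := Ainf_G (@fa_R i z (ltnW id) Hz).
have Gw := Ainf_G (@fa_R j w (ltnW jd) Hw).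
have f2n : f ^+ 2 != 0 by rewrite expf_neq0 // fnz.
case: (@ZW z w Gz Gw zw) => [[c Ec]|[[e Ee]|[c' [e' [Ec Ee]]]]].
- have cn : c != 0.
    by apply/eqP => c0; move: f2n; rewrite -zw Ec c0 rmorph0 mul0r eqxx.
  have [y [Hy Ey]] : exists y, fa i y /\ be * (f * T ^+ j) = al * y.
    by apply: (Hs _).2; exists (f * T ^+ j); split => //; apply: fa_gen.
  have Ey' : y = E (c%:P * 'X^j).
    apply: (mulfI aln); rewrite -Ey evM evC evXn mulrA Ez Ec; ring.
  have := Kc (@fa_H i y id Hy) Ey'; move/eqP; rewrite mulf_eq0 polyC_eq0 (negbTE cn) /=.
  by rewrite -size_poly_eq0 size_polyXn.
- have en : e != 0.
    by apply/eqP => e0; move: f2n; rewrite -zw Ee e0 rmorph0 mulr0 eqxx.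
  have [y [Hy Ey]] : exists y, fa j y /\ al * (f * T ^+ i) = be * y.
    by apply: (Hs _).1; exists (f * T ^+ i); split => //; apply: fa_gen.
  have Ey' : y = E (e%:P * 'X^i).
    apply: (mulfI ben); rewrite -Ey evM evC evXn mulrA Ew Ee; ring.
  have := Kc (@fa_H j y jd Hy) Ey'; move/eqP; rewrite mulf_eq0 polyC_eq0 (negbTE en) /=.
  by rewrite -size_poly_eq0 size_polyXn.
- have Eal : al = be * iota e'.
    apply: (mulIf fnz); rewrite Ew Ee; ring.
  have [y [Hy Ey]] : exists y, fa i y /\ be * (f * T ^+ j) = al * y.
    by apply: (Hs _).2; exists (f * T ^+ j); split => //; apply: fa_gen.
  have H1 : iota e' * y = iota 1 * (f * T ^+ j).
    apply: (mulfI ben); rewrite rmorph1 mul1r Ey Eal; ring.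
  have := Kgen (@Hscal i e' y (@fa_H i y id Hy)) ij jd H1.
  by move/eqP; rewrite oner_eq0.
Qed.

End P1.

Theorem lemma3 (F : finFieldType) (L : fieldType) (iota : {rmorphism F -> L})
  (T f : L) (a : {poly F}) (b : F) (d : nat) :
  (0 < d)%N -> a \is monic -> size a = d.+1 -> b != 0 ->
  transcendental_over iota T ->
  f ^+ 2 = ev iota T a * f + iota b ->
  ~ in_k iota T f ->
  (forall i : nat, (1 <= i <= d)%N ->
     forall x : L, ideal_pow (Ainf iota T f d) (frak_a iota T f d (d - 1)) i x
                   <-> frak_a iota T f d (d - i) x)
  /\ (forall i j : nat, (i < j <= d - 1)%N ->
        ~ same_class (Ainf iota T f d) (frak_a iota T f d i) (frak_a iota T f d j)).
Proof.
move=> d0 am asz bn Ttr feq fnk; split.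
- move=> i /andP [_ id] x.
  exact: (@part1 F L iota T f a b d d0 am asz bn feq i id x).
- move=> i j Hij.
  exact: (@part2 F L iota T f a b d d0 am asz bn feq Ttr fnk i j Hij).
Qed.
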